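(* \[ \lim_{M\to\infty}\ \lim_{k\to\infty}\ \sum_{i=M}^{k-M}\Pr[BINGO(i,k-i)]=0, \] where for each fixed $M$ the inner limit exists.
   Context: Fix $\alpha>1$. Let $(X_k,Y_k)_{k\ge2}$ be the Markov chain on $\mathbb N\times\mathbb N$ with $(X_2,Y_2)=(1,1)$ and, from state $(i,j)$, moving to $(i+1,j)$ with probability $i^\alpha/(i^\alpha+j^\alpha)$ and to $(i,j+1)$ with probability $j^\alpha/(i^\alpha+j^\alpha)$. $BINGO(i,j)$ is the event that the chain visits the state $(i,j)$. *)

(* Defs.v *)
From Stdlib Require Import Reals List Arith.
Import ListNotations.
Open Scope R_scope.

(* n^alpha for a natural number n >= 1 (0 for n = 0; never used at n = 0
   with nonzero weight). *)
Definition npow (alpha : R) (n : nat) : R :=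
  match n with 0%nat => 0 | _ => Rpower (INR n) alpha end.

Definition p_right (alpha : R) (i j : nat) : R :=
  npow alpha i / (npow alpha i + npow alpha j).
Definition p_up (alpha : R) (i j : nat) : R :=
  npow alpha j / (npow alpha i + npow alpha j).

(* law alpha t i = Pr[X_{t+2} = i] (then Y_{t+2} = t + 2 - i), computed by the
   forward (Chapman-Kolmogorov) recursion of the chain started at (1,1). *)
Fixpoint law (alpha : R) (t : nat) (i : nat) : R :=
  match t with
  | 0%nat => if Nat.eqb i 1 then 1 else 0
  | S t' =>
      (match i with
       | 0%nat => 0
       | S i' => law alpha t' i' * p_right alpha i' (t' + 2 - i')
       end)
      + law alpha t' i * p_up alpha i (t' + 2 - i)
  end.

(* Pr[BINGO(i,j)]: since X_k + Y_k = k, the chain visits (i,j) iff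
   (X_{i+j}, Y_{i+j}) = (i,j). States with a zero coordinate are never visited. *)
Definition bingo (alpha : R) (i j : nat) : R :=
  match i, j with
  | 0%nat, _ => 0
  | _, 0%nat => 0
  | _, _ => law alpha (i + j - 2) i
  end.

Definition range_sum (f : nat -> R) (a b : nat) : R :=
  fold_right Rplus 0 (map f (seq a (S b - a))).

(* Main.v *)
Require Import Defs.
From Stdlib Require Import Reals Lra Lia.
Open Scope R_scope.

Lemma exp_le' x y : x <= y -> exp x <= exp y.
Proof. intros [H|H]; [left; apply exp_increasing; auto| subst; lra]. Qed.
Lemma ln_le' x y : 0 < x -> x <= y -> ln x <= ln y.
Proof. intros Hx [H|H]; [left; apply ln_increasing; auto| subst; lra]. Qed.
Lemma ln_le_xm1 x : 0 < x -> ln x <= x - 1.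
Proof. intros Hx. pose proof (exp_ineq1_le (x-1)). rewrite <- (ln_exp (x-1)).
  apply ln_le'; auto; lra. Qed.

Lemma term_ineq (b m : R) : 0 < b -> 2 <= m ->
  exp (-(b+1) * ln m) <= (exp (-b * ln (m-1)) - exp (-b * ln m)) / b.
Proof.
  intros Hb Hm.
  assert (H1 : ln (m-1) <= ln m - 1/m).
  { assert (Hq : ln ((m-1)/m) <= (m-1)/m - 1) by (apply ln_le_xm1; apply Rdiv_lt_0_compat; lra).
    unfold Rdiv in Hq. rewrite ln_mult in Hq by (try apply Rinv_0_lt_compat; lra).
    rewrite ln_Rinv in Hq by lra.
    replace ((m-1) * / m - 1) with (-(1/m)) in Hq by (field; lra). lra. }
  assert (H2 : exp (-b * ln m) * (1 + b/m) <= exp (-b * ln (m-1))).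
  { apply Rle_trans with (exp (-b * ln m) * exp (b/m)).
    - apply Rmult_le_compat_l; [left; apply exp_pos| apply exp_ineq1_le].
    - rewrite <- exp_plus. apply exp_le'. 
      assert (b * ln (m-1) <= b * (ln m - 1/m)) by (apply Rmult_le_compat_l; lra).
      unfold Rdiv. replace (b * / m) with (b * (1/m)) by (field; lra). nra. }
  apply (Rmult_le_reg_r b); [auto|]. unfold Rdiv. rewrite Rmult_assoc, Rinv_l, Rmult_1_r by lra.
  assert (E : exp (-(b+1) * ln m) * b = exp (-b * ln m) * (b / m)).
  { replace (-(b+1) * ln m) with (-b * ln m + - ln m) by ring. rewrite exp_plus.
    rewrite exp_Ropp, exp_ln by lra. field; lra. }
  rewrite E. nra.
Qed.

Lemma sumn_le_ g h n : (forall i, (i < n)%nat -> g i <= h i) -> True. Proof. auto. Qed.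

Fixpoint sumn (g : nat -> R) (n : nat) : R :=
  match n with 0%nat => 0 | S n' => sumn g n' + g n' end.

Definition gg (b x : R) := exp (-b * ln x).

Lemma w_inv alpha m : (1 <= m)%nat -> / npow alpha m = exp (-alpha * ln (INR m)).
Proof. intros Hm. destruct m; [lia|]. unfold npow, Rpower.
  replace (-alpha * ln (INR (S m))) with (- (alpha * ln (INR (S m)))) by ring.
  rewrite exp_Ropp. auto. Qed.

Lemma tail_telescope alpha a n : 1 < alpha -> (2 <= a)%nat ->
  sumn (fun i => / npow alpha (a + i)) n <=
  (gg (alpha-1) (INR a - 1) - gg (alpha-1) (INR (a+n) - 1)) / (alpha - 1).
Proof.
  intros Ha Ha2. induction n.
  - simpl. rewrite Nat.add_0_r. unfold Rdiv. lra.
  - simpl. rewrite w_inv by lia.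
    pose proof (term_ineq (alpha-1) (INR (a+n)) ltac:(lra)) as T.
    assert (2 <= INR (a+n)) by (replace 2 with (INR 2) by (simpl; lra); apply le_INR; lia).
    specialize (T H). replace (-(alpha-1+1)) with (-alpha) in T by ring.
    replace (INR (a + S n) - 1) with (INR (a+n)) by (rewrite Nat.add_succ_r, S_INR; lra).
    unfold gg in *. unfold Rdiv in *. lra.
Qed.

Lemma gg_pos b x : 0 < gg b x. Proof. apply exp_pos. Qed.

Lemma gg_decr b x y : 0 < b -> 0 < x -> x <= y -> gg b y <= gg b x.
Proof. intros Hb Hx Hxy. unfold gg. apply exp_le'. pose proof (ln_le' x y Hx Hxy). nra. Qed.

Definition Tb alpha M := gg (alpha-1) (INR M - 1) / (alpha - 1).

Lemma tail_bound alpha M a n : 1 < alpha -> (2 <= M)%nat -> (M <= a)%nat ->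
  sumn (fun i => / npow alpha (a + i)) n <= Tb alpha M.
Proof.
  intros Ha HM HMa. eapply Rle_trans; [apply tail_telescope; auto; lia|].
  unfold Tb, Rdiv. apply Rmult_le_compat_r; [left; apply Rinv_0_lt_compat; lra|].
  pose proof (gg_pos (alpha-1) (INR (a+n) - 1)).
  assert (INR M - 1 <= INR a - 1) by (apply le_INR in HMa; lra).
  assert (1 < INR M - 1 \/ INR M - 1 = 1).
  { assert (2 <= INR M) by (replace 2 with (INR 2) by (simpl; lra); apply le_INR; lia). lra. }
  pose proof (gg_decr (alpha-1) (INR M - 1) (INR a - 1) ltac:(lra) ltac:(lra) H0). lra.
Qed.

Lemma Tb_small alpha eps N0 : 1 < alpha -> 0 < eps -> exists M, (N0 <= M)%nat /\ (2 <= M)%nat /\ Tb alpha M <= eps.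
Proof.
  intros Ha He.
  destruct (INR_unbounded (exp (- ln (eps * (alpha-1)) / (alpha-1)) + INR N0 + 2)) as [n Hn].
  exists n. pose proof (exp_pos (- ln (eps * (alpha-1)) / (alpha-1))) as Hp.
  assert (INR N0 < INR n) by (pose proof (pos_INR N0); lra).
  assert (2 < INR n) by (pose proof (pos_INR N0); lra).
  split; [apply INR_lt in H; lia|]. split; [replace 2 with (INR 2) in H0 by (simpl;lra); apply INR_lt in H0; lia|].
  unfold Tb, gg. apply (Rmult_le_reg_r (alpha-1)); [lra|]. unfold Rdiv. rewrite Rmult_assoc, Rinv_l, Rmult_1_r by lra.
  rewrite <- (exp_ln (eps * (alpha-1))) by (apply Rmult_lt_0_compat; lra).
  apply exp_le'.
  assert (ln (exp (- ln (eps * (alpha - 1)) / (alpha - 1))) <= ln (INR n - 1)) by (apply ln_le'; pose proof (pos_INR N0); lra).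
  rewrite ln_exp in H1.
  assert ((alpha-1) * (- ln (eps * (alpha - 1)) / (alpha - 1)) <= (alpha-1) * ln (INR n - 1)) by (apply Rmult_le_compat_l; lra).
  replace ((alpha-1) * (- ln (eps * (alpha - 1)) / (alpha - 1))) with (- ln (eps * (alpha - 1))) in H2 by (field; lra).
  lra.
Qed.

Lemma sumn_ext (g h : nat -> R) n : (forall i, (i < n)%nat -> g i = h i) -> sumn g n = sumn h n.
Proof. induction n; simpl; intros H; auto. rewrite IHn by (intros; apply H; lia). rewrite H by lia. auto. Qed.

Lemma sumn_le (g h : nat -> R) n : (forall i, (i < n)%nat -> g i <= h i) -> sumn g n <= sumn h n.
Proof. induction n; simpl; intros H; [lra|]. specialize (IHn ltac:(intros; apply H; lia)). specialize (H n ltac:(lia)). lra. Qed.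

Lemma sumn_plus g h n : sumn (fun i => g i + h i) n = sumn g n + sumn h n.
Proof. induction n; simpl; [lra|]. rewrite IHn; lra. Qed.

Lemma sumn_scal a g n : sumn (fun i => a * g i) n = a * sumn g n.
Proof. induction n; simpl; [lra|]. rewrite IHn; lra. Qed.

Lemma sumn_shift g n : sumn g (S n) = g 0%nat + sumn (fun i => g (S i)) n.
Proof. induction n; simpl in *; [lra|]. rewrite IHn; lra. Qed.

Lemma sumn_S g n : sumn g (S n) = sumn g n + g n. Proof. reflexivity. Qed.

Section Chain.
Variable alpha : R.
Hypothesis Ha : 1 < alpha.

Lemma npow_nonneg n : 0 <= npow alpha n.
Proof. destruct n; simpl; [lra|]. unfold Rpower; left; apply exp_pos. Qed.

Lemma npow_ge1 n : (1 <= n)%nat -> 1 <= npow alpha n.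
Proof. intros Hn. destruct n; [lia|]. unfold npow, Rpower. rewrite <- exp_0. apply exp_le'.
  assert (0 <= ln (INR (S n))). { rewrite <- ln_1. apply ln_le'; [lra|]. rewrite S_INR; pose proof (pos_INR n); lra. }
  nra. Qed.

Lemma div_nonneg a b : 0 <= a -> 0 <= b -> 0 <= a / b.
Proof. intros H1 [H2|H2]. - unfold Rdiv; apply Rmult_le_pos; [auto| left; apply Rinv_0_lt_compat; auto].
  - subst; unfold Rdiv; rewrite Rinv_0; lra. Qed.

Lemma pr_nonneg i j : 0 <= p_right alpha i j.
Proof. unfold p_right; apply div_nonneg; pose proof (npow_nonneg i); pose proof (npow_nonneg j); lra. Qed.
Lemma pu_nonneg i j : 0 <= p_up alpha i j.
Proof. unfold p_up; apply div_nonneg; pose proof (npow_nonneg i); pose proof (npow_nonneg j); lra. Qed.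

Lemma p_sum i j : (1 <= i)%nat -> (1 <= j)%nat -> p_right alpha i j + p_up alpha i j = 1.
Proof. intros; unfold p_right, p_up. pose proof (npow_ge1 i H); pose proof (npow_ge1 j H0). field; lra. Qed.

Lemma law_nonneg t i : 0 <= law alpha t i.
Proof. revert i; induction t; intros i; simpl.
  - destruct (Nat.eqb i 1); lra.
  - apply Rplus_le_le_0_compat; [destruct i; [lra|]|]; apply Rmult_le_pos; auto using pr_nonneg, pu_nonneg. Qed.

Lemma law_0 t : law alpha t 0 = 0.
Proof. induction t; simpl; auto. rewrite IHt; ring. Qed.

Lemma law_big t i : (t + 2 <= i)%nat -> law alpha t i = 0.
Proof. revert i; induction t; intros i Hi; simpl.
  - destruct i as [|[|]]; simpl; try lia; auto.
  - destruct i; [lia|]. rewrite IHt by lia. rewrite (IHt (S i)) by lia. ring. Qed.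

Definition E t (f : nat -> nat -> R) := sumn (fun i => law alpha t i * f i (t + 2 - i)%nat) (t + 2).

Definition Pf (f : nat -> nat -> R) i j := p_right alpha i j * f (S i) j + p_up alpha i j * f i (S j).

Lemma E_step t f : E (S t) f = E t (Pf f).
Proof.
  unfold E. simpl law.
  rewrite (sumn_ext _ (fun i => (match i with 0%nat => 0 | S i' => law alpha t i' * p_right alpha i' (t + 2 - i') end) * f i (S t + 2 - i)%nat
     + law alpha t i * p_up alpha i (t + 2 - i) * f i (S t + 2 - i)%nat)) by (intros; ring).
  rewrite sumn_plus. replace (S t + 2)%nat with (S (t + 2)) by lia.
  rewrite sumn_shift. rewrite sumn_S.
  rewrite (law_big t (t+2)) by lia. unfold Pf.
  rewrite (sumn_ext (fun i => law alpha t i * (p_right alpha i (t + 2 - i) * f (S i) (t + 2 - i)%nat + p_up alpha i (t + 2 - i) * f i (S (t + 2 - i))))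
     (fun i => law alpha t i * p_right alpha i (t + 2 - i) * f (S i) (t + 2 - i)%nat + law alpha t i * p_up alpha i (t + 2 - i) * f i (S (t + 2 - i)))) by (intros; ring).
  rewrite sumn_plus.
  assert (E1 : sumn (fun i => match S i with 0%nat => 0 | S i' => law alpha t i' * p_right alpha i' (t + 2 - i') end * f (S i) (S (t + 2) - S i)%nat) (t + 2)
     = sumn (fun i => law alpha t i * p_right alpha i (t + 2 - i) * f (S i) (t + 2 - i)%nat) (t + 2)).
  { apply sumn_ext; intros. reflexivity. }
  assert (E2 : sumn (fun i => law alpha t i * p_up alpha i (t + 2 - i) * f i (S (t + 2) - i)%nat) (t + 2)
     = sumn (fun i => law alpha t i * p_up alpha i (t + 2 - i) * f i (S (t + 2 - i))) (t + 2)).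
  { apply sumn_ext; intros. f_equal. f_equal. lia. }
  rewrite E1, E2. ring.
Qed.


Lemma E_mono t f g : (forall i, (1 <= i <= t + 1)%nat -> f i (t + 2 - i)%nat <= g i (t + 2 - i)%nat) -> E t f <= E t g.
Proof. intros H. unfold E. apply sumn_le. intros i Hi. destruct i.
  - rewrite law_0; lra.
  - apply Rmult_le_compat_l; [apply law_nonneg| apply H; lia]. Qed.

Lemma E_ext t f g : (forall i, (1 <= i <= t + 1)%nat -> f i (t + 2 - i)%nat = g i (t + 2 - i)%nat) -> E t f = E t g.
Proof. intros H. apply Rle_antisym; apply E_mono; intros; rewrite H; auto; lra. Qed.

Lemma E_lin t a b f g : E t (fun i j => a * f i j + b * g i j) = a * E t f + b * E t g.
Proof. unfold E. rewrite <- !sumn_scal, <- sumn_plus. apply sumn_ext; intros; ring. Qed.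

Lemma E_harm f : (forall i j, (1 <= i)%nat -> (1 <= j)%nat -> Pf f i j = f i j) -> forall t, E t f = f 1%nat 1%nat.
Proof. intros H t. induction t.
  - unfold E. simpl. ring.
  - rewrite E_step. rewrite <- IHt. apply E_ext. intros. apply H; lia. Qed.

Lemma E_const t c : E t (fun _ _ => c) = c.
Proof. apply (E_harm (fun _ _ => c)). intros. unfold Pf. rewrite <- Rmult_plus_distr_r, (p_sum i j) by auto. ring. Qed.

End Chain.
From Coquelicot Require Import Complex.

Fixpoint cprod (u : nat -> C) (n : nat) : C :=
  match n with 0%nat => RtoC 1 | S n' => (cprod u n' * u n')%C end.
Fixpoint seg (u : nat -> C) (a n : nat) : C :=
  match n with 0%nat => RtoC 1 | S n' => (seg u a n' * u (a + n')%nat)%C end.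
Fixpoint rprod (u : nat -> R) (n : nat) : R :=
  match n with 0%nat => 1 | S n' => rprod u n' * u n' end.

Lemma cprod_seg u a n : cprod u (a + n) = (cprod u a * seg u a n)%C.
Proof. induction n; simpl. - rewrite Nat.add_0_r. ring. - rewrite Nat.add_succ_r. simpl. rewrite IHn. ring. Qed.

Lemma Cmod_pair_ge1 c : 1 <= Cmod (1, c).
Proof. unfold Cmod; simpl. apply Rle_trans with (sqrt 1); [rewrite sqrt_1; lra|]. apply sqrt_le_1_alt. pose proof (pow2_ge_0 c). simpl in *. lra. Qed.
Lemma Cmod_pair_ge c : Rabs c <= Cmod (1, c).
Proof. unfold Cmod; simpl. rewrite <- sqrt_Rsqr_abs. apply sqrt_le_1_alt. unfold Rsqr. simpl. nra. Qed.
Lemma Cmod_pair_m1 c : Cmod ((1, c) - 1)%C = Rabs c.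
Proof. unfold Cmod, Cminus, Cplus, Copp; simpl. rewrite <- sqrt_Rsqr_abs. f_equal. unfold Rsqr. ring. Qed.

Section Cx.
Variable alpha : R.
Hypothesis Ha : 1 < alpha.
Variable y : R.

Definition cc m := y / npow alpha m.
Definition um m : C := (1, - cc m).
Definition up m : C := (1, cc m).
Definition FF i j := (cprod um i * cprod up j)%C.
Definition fR i j := fst (FF i j).
Definition Qr n := rprod (fun m => 1 + cc m ^ 2) n.

Lemma fR_harm i j : (1 <= i)%nat -> (1 <= j)%nat -> Pf alpha fR i j = fR i j.
Proof.
  intros Hi Hj. unfold Pf, fR.
  assert (A1 : FF (S i) j = (FF i j * um i)%C) by (unfold FF; simpl; ring).
  assert (A2 : FF i (S j) = (FF i j * up j)%C) by (unfold FF; simpl; ring).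
  rewrite A1, A2. destruct (FF i j) as [x v]. unfold um, up, cc, p_right, p_up. simpl.
  pose proof (npow_ge1 alpha Ha i Hi); pose proof (npow_ge1 alpha Ha j Hj). field. lra.
Qed.

Lemma E_fR t : E alpha t fR = 1.
Proof. rewrite (E_harm alpha fR fR_harm t). unfold fR, FF, um, up, cc. simpl. unfold Rdiv. rewrite Rinv_0. ring. Qed.

Lemma cprod_conj n : (cprod um n * cprod up n)%C = RtoC (Qr n).
Proof. induction n; simpl. - unfold Qr. simpl. apply injective_projections; simpl; ring.
  - replace (cprod um n * um n * (cprod up n * up n))%C with ((cprod um n * cprod up n) * (um n * up n))%C by ring.
    rewrite IHn. unfold Qr. simpl rprod. unfold um, up, RtoC, Cmult. apply injective_projections; simpl; ring. Qed.

Lemma Qr_ge1 n : 1 <= Qr n.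
Proof. unfold Qr; induction n; cbn [rprod]; [lra|]. assert (0 <= cc n ^ 2) by (apply pow2_ge_0). nra. Qed.

Lemma Qr_ge n : (2 <= n)%nat -> 1 + y^2 <= Qr n.
Proof. intros Hn. induction n; [lia|]. destruct (Nat.eq_dec n 1).
  - subst. unfold Qr, cc. simpl. unfold Rpower. rewrite ln_1, Rmult_0_r, exp_0. unfold Rdiv. rewrite Rinv_0, Rinv_1. nra.
  - specialize (IHn ltac:(lia)). unfold Qr in *. cbn [rprod]. assert (0 <= cc n ^ 2) by (apply pow2_ge_0).
    pose proof (pow2_ge_0 y). nra. Qed.



Lemma Cmod_um m : 1 <= Cmod (um m). Proof. apply Cmod_pair_ge1. Qed.
Lemma Cmod_up m : 1 <= Cmod (up m). Proof. apply Cmod_pair_ge1. Qed.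

Lemma seg_ge1 u a n : (forall m, 1 <= Cmod (u m)) -> 1 <= Cmod (seg u a n).
Proof. intros H. induction n; simpl. - rewrite Cmod_1; lra.
  - rewrite Cmod_mult. specialize (H (a+n)%nat). nra. Qed.

Lemma seg_ge_fac u a n k : (forall m, 1 <= Cmod (u m)) -> (k < n)%nat -> Cmod (u (a+k)%nat) <= Cmod (seg u a n).
Proof. intros H Hk. induction n; [lia|]. simpl. rewrite Cmod_mult.
  pose proof (seg_ge1 u a n H). pose proof (H (a+n)%nat). pose proof (H (a+k)%nat).
  destruct (Nat.eq_dec k n). - subst. nra. - specialize (IHn ltac:(lia)). nra. Qed.

Lemma sumn_nonneg g n : (forall i, 0 <= g i) -> 0 <= sumn g n.
Proof. intros H; induction n; simpl; [lra|]. specialize (H n); lra. Qed.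

Lemma seg_bound u a n : Cmod (seg u a n - 1)%C <= exp (sumn (fun k => Cmod (u (a+k)%nat - 1)%C) n) - 1.
Proof. induction n; simpl.
  - replace (RtoC 1 - 1)%C with (RtoC 0) by (unfold RtoC, Cminus, Cplus, Copp; apply injective_projections; simpl; ring).
    rewrite Cmod_0, exp_0. lra.
  - set (s := seg u a n) in *. set (v := u (a+n)%nat) in *.
    set (S0 := sumn _ n) in *.
    replace (s * v - 1)%C with ((s - 1) * v + (v - 1))%C by ring.
    eapply Rle_trans; [apply Cmod_triangle|]. rewrite Cmod_mult.
    assert (Hv : Cmod v <= 1 + Cmod (v - 1)%C).
    { replace v with ((v - 1) + 1)%C at 1 by ring. eapply Rle_trans; [apply Cmod_triangle|]. rewrite Cmod_1. lra. }
    pose proof (Cmod_ge_0 (s - 1)%C). pose proof (Cmod_ge_0 (v - 1)%C).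
    assert (0 <= S0) by (apply sumn_nonneg; intros; apply Cmod_ge_0).
    pose proof (exp_ineq1_le (Cmod (v-1)%C)). rewrite exp_plus.
    assert (1 <= exp S0) by (rewrite <- exp_0; apply exp_le'; lra).
    apply Rle_trans with ((exp S0 - 1) * (1 + Cmod (v - 1)%C) + Cmod (v - 1)%C).
    + apply Rplus_le_compat_r. apply Rle_trans with (Cmod (s - 1)%C * (1 + Cmod (v - 1)%C)); [apply Rmult_le_compat_l; auto|].
      apply Rmult_le_compat_r; lra.
    + nra.
Qed.

Lemma prod2_bound D1 D2 S1 S2 : 0 <= S1 -> 0 <= S2 -> Cmod (D1 - 1)%C <= exp S1 - 1 -> Cmod (D2 - 1)%C <= exp S2 - 1 ->
  Cmod (D1 * D2 - 1)%C <= exp (S1 + S2) - 1.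
Proof. intros H1 H2 B1 B2.
  replace (D1 * D2 - 1)%C with ((D1 - 1) * D2 + (D2 - 1))%C by ring.
  eapply Rle_trans; [apply Cmod_triangle|]. rewrite Cmod_mult, exp_plus.
  assert (Hv : Cmod D2 <= 1 + Cmod (D2 - 1)%C).
  { replace D2 with ((D2 - 1) + 1)%C at 1 by ring. eapply Rle_trans; [apply Cmod_triangle|]. rewrite Cmod_1. lra. }
  pose proof (Cmod_ge_0 (D1 - 1)%C). pose proof (Cmod_ge_0 D2).
  assert (1 <= exp S1) by (rewrite <- exp_0; apply exp_le'; lra).
  assert (1 <= exp S2) by (rewrite <- exp_0; apply exp_le'; lra).
  assert (Cmod (D1 - 1)%C * Cmod D2 <= (exp S1 - 1) * exp S2) by (apply Rmult_le_compat; lra).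
  nra.
Qed.

Definition DD i j := (seg um i j * seg up j i)%C.

Lemma FF_DD i j : (FF i j * DD i j)%C = RtoC (Qr (i + j)).
Proof. rewrite <- cprod_conj. unfold FF, DD. rewrite (cprod_seg um i j), (Nat.add_comm i j), (cprod_seg up j i). ring. Qed.

Lemma DD_ge1 i j : 1 <= Cmod (DD i j).
Proof. unfold DD. rewrite Cmod_mult. pose proof (seg_ge1 um i j Cmod_um). pose proof (seg_ge1 up j i Cmod_up). nra. Qed.

Lemma Cmod_FF i j : Cmod (FF i j) * Cmod (DD i j) = Qr (i + j).
Proof. rewrite <- Cmod_mult, FF_DD, Cmod_R. apply Rabs_right. pose proof (Qr_ge1 (i+j)); lra. Qed.

Lemma Cmod_FF_le i j : Cmod (FF i j) <= Qr (i + j).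
Proof. rewrite <- Cmod_FF. pose proof (DD_ge1 i j). pose proof (Cmod_ge_0 (FF i j)). nra. Qed.

Lemma fR_ge_neg i j : - Qr (i + j) <= fR i j.
Proof. unfold fR. pose proof (re_le_Cmod (FF i j)). pose proof (Cmod_FF_le i j). unfold Re in H. 
  pose proof (Rle_abs (- fst (FF i j))). rewrite Rabs_Ropp in H1. lra. Qed.


Hypothesis Hy : 0 < y.

Lemma cc_nonneg m : 0 <= cc m.
Proof. unfold cc. apply div_nonneg; [lra| apply npow_nonneg]. Qed.

Lemma fR_ge_i i j : (1 <= i)%nat -> (1 <= j)%nat -> - (Qr (i + j) * npow alpha i / y) <= fR i j.
Proof. intros Hi Hj.
  assert (H1 : y / npow alpha i <= Cmod (DD i j)).
  { unfold DD. rewrite Cmod_mult. pose proof (seg_ge1 up j i Cmod_up).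
    pose proof (seg_ge_fac um i j 0 Cmod_um ltac:(lia)). rewrite Nat.add_0_r in H0.
    pose proof (Cmod_pair_ge (- cc i)). rewrite Rabs_Ropp, Rabs_right in H1 by (apply Rle_ge, cc_nonneg).
    change (Cmod (1, - cc i)) with (Cmod (um i)) in H1. change (y / npow alpha i) with (cc i). pose proof (Cmod_ge_0 (seg um i j)). nra. }
  pose proof (Cmod_FF i j). pose proof (Cmod_ge_0 (FF i j)). pose proof (npow_ge1 alpha Ha i Hi).
  assert (Cmod (FF i j) <= Qr (i + j) * npow alpha i / y).
  { apply (Rmult_le_reg_r (y / npow alpha i)). { apply Rdiv_lt_0_compat; lra. }
    replace (Qr (i + j) * npow alpha i / y * (y / npow alpha i)) with (Qr (i+j)) by (field; lra).
    rewrite <- H. apply Rmult_le_compat_l; auto. }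
  unfold fR. pose proof (re_le_Cmod (FF i j)). unfold Re in H4.
  pose proof (Rle_abs (- fst (FF i j))). rewrite Rabs_Ropp in H5. lra.
Qed.

Lemma fR_ge_j i j : (1 <= i)%nat -> (1 <= j)%nat -> - (Qr (i + j) * npow alpha j / y) <= fR i j.
Proof. intros Hi Hj.
  assert (H1 : y / npow alpha j <= Cmod (DD i j)).
  { unfold DD. rewrite Cmod_mult. pose proof (seg_ge1 um i j Cmod_um).
    pose proof (seg_ge_fac up j i 0 Cmod_up ltac:(lia)). rewrite Nat.add_0_r in H0.
    pose proof (Cmod_pair_ge (cc j)). rewrite Rabs_right in H1 by (apply Rle_ge, cc_nonneg).
    change (Cmod (1, cc j)) with (Cmod (up j)) in H1. change (y / npow alpha j) with (cc j). pose proof (Cmod_ge_0 (seg up j i)). nra. }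
  pose proof (Cmod_FF i j). pose proof (Cmod_ge_0 (FF i j)). pose proof (npow_ge1 alpha Ha j Hj).
  assert (Cmod (FF i j) <= Qr (i + j) * npow alpha j / y).
  { apply (Rmult_le_reg_r (y / npow alpha j)). { apply Rdiv_lt_0_compat; lra. }
    replace (Qr (i + j) * npow alpha j / y * (y / npow alpha j)) with (Qr (i+j)) by (field; lra).
    rewrite <- H. apply Rmult_le_compat_l; auto. }
  unfold fR. pose proof (re_le_Cmod (FF i j)). unfold Re in H4.
  pose proof (Rle_abs (- fst (FF i j))). rewrite Rabs_Ropp in H5. lra.
Qed.

Lemma segsum_bound (u : nat -> C) (s : R) a n M : (2 <= M)%nat -> (M <= a)%nat ->
  (forall m, Cmod (u m - 1)%C = cc m) ->
  sumn (fun k => Cmod (u (a+k)%nat - 1)%C) n <= y * Tb alpha M.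
Proof. intros HM HMa Hu.
  rewrite (sumn_ext _ (fun k => y * / npow alpha (a + k))) by (intros; rewrite Hu; reflexivity).
  rewrite sumn_scal. apply Rmult_le_compat_l; [lra|]. apply tail_bound; auto. Qed.

Lemma fR_ge_big M i j : (2 <= M)%nat -> (M <= i)%nat -> (M <= j)%nat ->
  Qr (i + j) * (1 - (exp (2 * (y * Tb alpha M)) - 1)) <= fR i j.
Proof. intros HM Hi Hj.
  assert (HD : Cmod (DD i j - 1)%C <= exp (2 * (y * Tb alpha M)) - 1).
  { set (S1 := sumn (fun k => Cmod (um (i+k)%nat - 1)%C) j).
    set (S2 := sumn (fun k => Cmod (up (j+k)%nat - 1)%C) i).
    assert (S1 <= y * Tb alpha M) by (apply (segsum_bound um 0); auto; intros; unfold um; rewrite Cmod_pair_m1, Rabs_Ropp, Rabs_right; auto; apply Rle_ge, cc_nonneg).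
    assert (S2 <= y * Tb alpha M) by (apply (segsum_bound up 0); auto; intros; unfold up; rewrite Cmod_pair_m1, Rabs_right; auto; apply Rle_ge, cc_nonneg).
    assert (0 <= S1) by (apply sumn_nonneg; intros; apply Cmod_ge_0).
    assert (0 <= S2) by (apply sumn_nonneg; intros; apply Cmod_ge_0).
    unfold DD. eapply Rle_trans; [apply (prod2_bound _ _ S1 S2); auto; apply seg_bound|].
    apply Rplus_le_compat_r. apply exp_le'. lra. }
  set (d := exp (2 * (y * Tb alpha M)) - 1) in *.
  assert (E1 : (FF i j - RtoC (Qr (i+j)))%C = (FF i j * (1 - DD i j))%C) by (rewrite <- FF_DD; ring).
  assert (Cmod (FF i j - RtoC (Qr (i+j)))%C <= Qr (i + j) * d).
  { rewrite E1, Cmod_mult. replace (1 - DD i j)%C with (- (DD i j - 1))%C by ring. rewrite Cmod_opp.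
    pose proof (Cmod_FF_le i j). pose proof (Cmod_ge_0 (DD i j - 1)%C). pose proof (Cmod_ge_0 (FF i j)).
    apply Rmult_le_compat; auto. }
  pose proof (re_le_Cmod (FF i j - RtoC (Qr (i+j)))%C). unfold Re in H0.
  replace (fst (FF i j - RtoC (Qr (i + j)))%C) with (fR i j - Qr (i+j)) in H0 by (unfold fR; simpl; ring).
  pose proof (Rle_abs (- (fR i j - Qr (i + j)))). rewrite Rabs_Ropp in H1. lra.
Qed.
End Cx.

Local Open Scope bool_scope.
Section Main.
Variable alpha : R.
Hypothesis Ha : 1 < alpha.

Definition ind (m : nat) (i j : nat) : R := if andb (m <=? i)%nat (m <=? j)%nat then 1 else 0.
Definition qE t m := E alpha t (ind m).

Lemma ind_01 m i j : 0 <= ind m i j <= 1.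
Proof. unfold ind. destruct (_ && _); lra. Qed.

Lemma qE_01 t m : 0 <= qE t m <= 1.
Proof. split.
  - rewrite <- (E_const alpha Ha t 0). apply E_mono. intros; apply ind_01.
  - rewrite <- (E_const alpha Ha t 1). apply E_mono. intros; apply ind_01. Qed.

Lemma qE_grow t m : qE t m <= qE (S t) m.
Proof. unfold qE. rewrite E_step. apply E_mono. intros i Hi.
  set (j := (t + 2 - i)%nat). assert (1 <= j)%nat by (unfold j; lia).
  unfold Pf, ind. destruct (m <=? i)%nat eqn:E1; destruct (m <=? j)%nat eqn:E2; simpl.
  - apply Nat.leb_le in E1, E2.
    replace ((m <=? S i)%nat) with true by (symmetry; apply Nat.leb_le; lia).
    replace ((m <=? S j)%nat) with true by (symmetry; apply Nat.leb_le; lia). simpl.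
    rewrite !Rmult_1_r, (p_sum alpha Ha i j) by lia. lra.
  - all: pose proof (pr_nonneg alpha i j); pose proof (pu_nonneg alpha i j);
    repeat match goal with |- context [if ?b then _ else _] => destruct b end; nra.
Qed.

Lemma qE_anti t m : qE t (S m) <= qE t m.
Proof. unfold qE. apply E_mono. intros i Hi. unfold ind.
  destruct (S m <=? i)%nat eqn:E1; destruct (S m <=? (t + 2 - i))%nat eqn:E2; simpl;
  try (destruct (_ && _); lra).
  apply Nat.leb_le in E1, E2.
  replace ((m <=? i)%nat) with true by (symmetry; apply Nat.leb_le; lia).
  replace ((m <=? (t+2-i))%nat) with true by (symmetry; apply Nat.leb_le; lia). simpl. lra.
Qed.

Lemma npow_le_sum m m0 : (m < m0)%nat -> npow alpha m <= sumn (fun k => npow alpha k) m0.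
Proof. intros H. induction m0; [lia|]. simpl. destruct (Nat.eq_dec m m0).
  - subst. pose proof (sumn_nonneg (fun k => npow alpha k) m0 (npow_nonneg alpha)). lra.
  - specialize (IHm0 ltac:(lia)). pose proof (npow_nonneg alpha m0). lra. Qed.

Lemma key t m0 M y : (1 <= m0)%nat -> (m0 <= M)%nat -> (2 <= M)%nat -> 0 < y ->
  (2 - (exp (2 * (y * Tb alpha M)) - 1)) * qE t M <=
  qE t m0 + sumn (fun k => npow alpha k) m0 / y + 1 / (1 + y^2).
Proof.
  intros Hm0 HmM HM Hy.
  set (d := exp (2 * (y * Tb alpha M)) - 1).
  set (C0 := sumn (fun k => npow alpha k) m0).
  set (eps := C0 / y).
  set (Q := Qr alpha y (t + 2)).
  assert (HQ1 : 1 + y^2 <= Q) by (apply Qr_ge; lia).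
  assert (HQ : 0 < Q) by (pose proof (pow2_ge_0 y); lra).
  assert (HC0 : 0 <= C0) by (apply sumn_nonneg, npow_nonneg).
  assert (Heps : 0 <= eps) by (apply div_nonneg; lra).
  set (g := fun i j => / Q * fR alpha y i j).
  assert (Eg : E alpha t g = / Q).
  { unfold g. 
    rewrite (E_ext alpha t _ (fun i j => / Q * fR alpha y i j + 0 * fR alpha y i j)) by (intros; ring).
    rewrite E_lin. rewrite E_fR by auto. ring. }
  set (h := fun i j => (2 - d) * ind M i j + ((eps - 1) * ind m0 i j + (-eps) * 1)).
  assert (Eh : E alpha t h = (2 - d) * qE t M + ((eps - 1) * qE t m0 + (-eps) * 1)).
  { unfold h, qE.
    rewrite (E_ext alpha t _ (fun i j => (2 - d) * ind M i j + 1 * ((fun i j => (eps - 1) * ind m0 i j + (-eps) * (fun _ _ => 1) i j) i j))) by (intros; simpl; ring).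
    rewrite (E_lin alpha t (2 - d) 1 (ind M)). rewrite (E_lin alpha t (eps - 1) (-eps) (ind m0) (fun _ _ => 1)).
    rewrite E_const by auto. ring. }
  assert (Hhg : E alpha t h <= E alpha t g).
  { apply E_mono. intros i Hi. set (j := (t + 2 - i)%nat).
    assert (Hij : (i + j = t + 2)%nat) by (unfold j; lia).
    assert (Hj : (1 <= j)%nat) by (unfold j; lia).
    unfold h, g.
    destruct ((M <=? i)%nat && (M <=? j)%nat) eqn:EM.
    - apply Bool.andb_true_iff in EM. destruct EM as [E1 E2]. apply Nat.leb_le in E1, E2.
      unfold ind. rewrite (proj2 (Nat.leb_le M i) E1), (proj2 (Nat.leb_le M j) E2).
      rewrite (proj2 (Nat.leb_le m0 i) ltac:(lia)), (proj2 (Nat.leb_le m0 j) ltac:(lia)). simpl.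
      pose proof (fR_ge_big alpha Ha y Hy M i j HM E1 E2). fold d in H.
      rewrite Hij in H. fold Q in H.
      apply Rle_trans with (/ Q * (Q * (1 - d))); [right; field; lra|].
      apply Rmult_le_compat_l; [left; apply Rinv_0_lt_compat; lra| exact H].
    - unfold ind. rewrite EM. 
      destruct ((m0 <=? i)%nat && (m0 <=? j)%nat) eqn:Em.
      + pose proof (fR_ge_neg alpha y i j). rewrite Hij in *. fold Q in H |- *.
        apply Rle_trans with (/ Q * (- Q)); [right; field; lra|].
        apply Rmult_le_compat_l; [left; apply Rinv_0_lt_compat; lra| exact H].
      + assert (Hsmall : (i < m0)%nat \/ (j < m0)%nat).
        { destruct (Nat.lt_ge_cases i m0); auto. destruct (Nat.lt_ge_cases j m0); auto.
          exfalso. rewrite (proj2 (Nat.leb_le m0 i) H), (proj2 (Nat.leb_le m0 j) H0) in Em. discriminate. }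
        assert (Hlow : - (Q * C0 / y) <= fR alpha y i j).
        { destruct Hsmall as [Hs|Hs].
          - pose proof (fR_ge_i alpha Ha y Hy i j ltac:(lia) Hj). rewrite Hij in H. fold Q in H.
            pose proof (npow_le_sum i m0 Hs). fold C0 in H0.
            assert (Q * npow alpha i / y <= Q * C0 / y).
            { unfold Rdiv. apply Rmult_le_compat_r; [left; apply Rinv_0_lt_compat; lra|]. apply Rmult_le_compat_l; lra. }
            lra.
          - pose proof (fR_ge_j alpha Ha y Hy i j ltac:(lia) Hj). rewrite Hij in H. fold Q in H.
            pose proof (npow_le_sum j m0 Hs). fold C0 in H0.
            assert (Q * npow alpha j / y <= Q * C0 / y).
            { unfold Rdiv. apply Rmult_le_compat_r; [left; apply Rinv_0_lt_compat; lra|]. apply Rmult_le_compat_l; lra. }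
            lra. }
        apply Rle_trans with (/ Q * (- (Q * C0 / y))); [right; unfold eps; field; lra|].
        apply Rmult_le_compat_l; [left; apply Rinv_0_lt_compat; lra| exact Hlow]. }
  rewrite Eh, Eg in Hhg.
  assert (/ Q <= 1 / (1 + y^2)) by (unfold Rdiv; rewrite Rmult_1_l; apply Rinv_le_contravar; [pose proof (pow2_ge_0 y); lra| lra]).
  pose proof (qE_01 t m0). fold eps. nra.
Qed.
End Main.

Lemma fold_seq (g : nat -> R) a n : List.fold_right Rplus 0 (List.map g (List.seq a n)) = sumn (fun i => g (a + i)%nat) n.
Proof. revert a; induction n; intros a; [reflexivity|].
  change (List.seq a (S n)) with (List.cons a (List.seq (S a) n)).
  change (List.fold_right Rplus 0 (List.map g (List.cons a (List.seq (S a) n)))) with (g a + List.fold_right Rplus 0 (List.map g (List.seq (S a) n))).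
  rewrite IHn, sumn_shift, Nat.add_0_r.
  assert (sumn (fun i => g (S a + i)%nat) n = sumn (fun i => g (a + S i)%nat) n) by (apply sumn_ext; intros; f_equal; lia).
  rewrite H. lra. Qed.

Lemma sumn_split h a n : sumn h (a + n) = sumn h a + sumn (fun i => h (a + i)%nat) n.
Proof. induction n; simpl. - rewrite Nat.add_0_r; lra. - rewrite Nat.add_succ_r. simpl. rewrite IHn. lra. Qed.

Lemma sumn_zero h n : (forall i, (i < n)%nat -> h i = 0) -> sumn h n = 0.
Proof. intros H. induction n; simpl; auto. rewrite IHn by (intros; apply H; lia). rewrite H by lia. lra. Qed.

Lemma range_sum_ind g a b N : (S b <= N)%nat ->
  range_sum g a b = sumn (fun i => if andb (a <=? i)%nat (i <=? b)%nat then g i else 0) N.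
Proof. intros HN. unfold range_sum. rewrite fold_seq.
  destruct (Nat.le_gt_cases a (S b)).
  - replace N with (a + (S b - a) + (N - S b))%nat by lia. rewrite !sumn_split.
    rewrite (sumn_zero (fun i => if andb (a <=? i)%nat (i <=? b)%nat then g i else 0) a).
    2:{ intros i Hi. replace ((a <=? i)%nat) with false by (symmetry; apply Nat.leb_gt; lia). reflexivity. }
    rewrite (sumn_zero (fun i => if andb (a <=? (a + (S b - a) + i))%nat ((a + (S b - a) + i) <=? b)%nat then g _ else 0)).
    2:{ intros i Hi. replace (((a + (S b - a) + i) <=? b)%nat) with false by (symmetry; apply Nat.leb_gt; lia).
        destruct (_ <=? _)%nat; reflexivity. }
    rewrite Rplus_0_l, Rplus_0_r. apply sumn_ext. intros i Hi.
    replace ((a <=? a + i)%nat) with true by (symmetry; apply Nat.leb_le; lia).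
    replace ((a + i <=? b)%nat) with true by (symmetry; apply Nat.leb_le; lia). reflexivity.
  - replace (S b - a)%nat with 0%nat by lia. simpl. symmetry. apply sumn_zero. intros i Hi.
    destruct ((a <=? i)%nat) eqn:E1; [|reflexivity].
    replace ((i <=? b)%nat) with false by (symmetry; apply Nat.leb_gt; apply Nat.leb_le in E1; lia). reflexivity.
Qed.

Section Final.
Variable alpha : R.
Hypothesis Ha : 1 < alpha.

Definition uu M k := range_sum (fun i => bingo alpha i (k - i)) M (k - M).

Lemma uu_small M k : (k < 2)%nat -> uu M k = 0.
Proof. intros Hk. unfold uu. rewrite (range_sum_ind _ _ _ (S (k - M))) by lia. apply sumn_zero.
  intros i Hi. destruct (andb _ _); [|reflexivity]. unfold bingo.
  destruct i; [reflexivity|]. destruct (k - S i)%nat eqn:E; [reflexivity|]. lia. Qed.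

Lemma uu_qE M t : uu M (t + 2) = qE alpha t M.
Proof. unfold uu. rewrite (range_sum_ind _ _ _ (t + 3)) by lia.
  unfold qE, E. replace (t + 3)%nat with (S (t + 2)) by lia. rewrite sumn_S.
  assert (Hlast : (if andb (M <=? t + 2)%nat (t + 2 <=? t + 2 - M)%nat then bingo alpha (t + 2) (t + 2 - (t + 2)) else 0) = 0).
  { rewrite Nat.sub_diag. destruct (andb _ _); [|reflexivity]. unfold bingo. destruct (t+2)%nat; reflexivity. }
  rewrite Hlast, Rplus_0_r. apply sumn_ext. intros i Hi.
  destruct i.
  - clear Hlast. rewrite (law_0 alpha t), Rmult_0_l. destruct (andb _ _); reflexivity.
  - clear Hlast. unfold ind. assert (Hb : bingo alpha (S i) (t + 2 - S i) = law alpha t (S i)).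
    { unfold bingo. destruct (t + 2 - S i)%nat eqn:E; [lia|]. f_equal. lia. }
    rewrite Hb.
    destruct (M <=? S i)%nat eqn:E1; destruct (S i <=? t + 2 - M)%nat eqn:E2; destruct (M <=? t + 2 - S i)%nat eqn:E3;
    cbn [andb]; try lra; exfalso;
    repeat match goal with H : (_ <=? _)%nat = true |- _ => apply Nat.leb_le in H | H : (_ <=? _)%nat = false |- _ => apply Nat.leb_gt in H end; lia.
Qed.


Lemma uu_01 M k : 0 <= uu M k <= 1.
Proof. destruct (Nat.lt_ge_cases k 2). - rewrite uu_small by auto; lra.
  - replace k with ((k - 2) + 2)%nat by lia. rewrite uu_qE. apply qE_01; auto. Qed.

Lemma uu_grow M : Un_growing (uu M).
Proof. intros n. destruct n as [|[|t]].
  - rewrite !uu_small by lia. lra.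
  - rewrite uu_small by lia. apply uu_01.
  - replace (S (S t)) with (t + 2)%nat by lia. replace (S (t + 2)) with (S t + 2)%nat by lia.
    rewrite !uu_qE. apply qE_grow; auto. Qed.

Lemma uu_anti M n : uu (S M) n <= uu M n.
Proof. destruct (Nat.lt_ge_cases n 2). - rewrite !uu_small by auto; lra.
  - replace n with ((n - 2) + 2)%nat by lia. rewrite !uu_qE. apply qE_anti; auto. Qed.

Lemma uu_ub M : has_ub (uu M).
Proof. exists 1. intros x [n ->]. apply uu_01. Qed.

Definition LL M := proj1_sig (growing_cv (uu M) (uu_grow M) (uu_ub M)).

Lemma LL_cv M : Un_cv (uu M) (LL M).
Proof. unfold LL. destruct (growing_cv _ _ _); simpl; auto. Qed.

Lemma lim_le a l B : Un_cv a l -> (forall n, a n <= B) -> l <= B.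
Proof. intros H Hb. destruct (Rle_lt_dec l B); auto. exfalso.
  destruct (H (l - B)) as [N HN]; [lra|]. specialize (HN N (le_n N)). specialize (Hb N).
  unfold Rdist in HN. apply Rabs_def2 in HN. lra. Qed.

Lemma lim_ge a l B : Un_cv a l -> (forall n, B <= a n) -> B <= l.
Proof. intros H Hb. destruct (Rle_lt_dec B l); auto. exfalso.
  destruct (H (B - l)) as [N HN]; [lra|]. specialize (HN N (le_n N)). specialize (Hb N).
  unfold Rdist in HN. apply Rabs_def2 in HN. lra. Qed.

Lemma uu_le_LL M n : uu M n <= LL M.
Proof. apply growing_ineq; [apply uu_grow| apply LL_cv]. Qed.

Lemma LL_nonneg M : 0 <= LL M.
Proof. pose proof (uu_le_LL M 0). rewrite uu_small in H by lia. auto. Qed.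

Lemma LL_decr : Un_decreasing LL.
Proof. intros M. apply (lim_le (uu (S M))); [apply LL_cv|]. intros n.
  eapply Rle_trans; [apply uu_anti| apply uu_le_LL]. Qed.

Lemma key_lim m0 M y : (1 <= m0)%nat -> (m0 <= M)%nat -> (2 <= M)%nat -> 0 < y ->
  exp (2 * (y * Tb alpha M)) - 1 < 2 ->
  (2 - (exp (2 * (y * Tb alpha M)) - 1)) * LL M <=
  LL m0 + sumn (fun k => npow alpha k) m0 / y + 1 / (1 + y^2).
Proof. intros H1 H2 H3 Hy Hd.
  set (d := exp (2 * (y * Tb alpha M)) - 1) in *.
  set (c := LL m0 + sumn (fun k => npow alpha k) m0 / y + 1 / (1 + y^2)).
  assert (Hc : 0 <= c).
  { unfold c. pose proof (LL_nonneg m0). assert (0 <= sumn (fun k => npow alpha k) m0 / y) by (apply div_nonneg; [apply sumn_nonneg, npow_nonneg| lra]).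
    assert (0 <= 1 / (1 + y^2)) by (apply div_nonneg; [lra| pose proof (pow2_ge_0 y); lra]). lra. }
  assert (HL : LL M <= c / (2 - d)).
  { apply (lim_le (uu M)); [apply LL_cv|]. intros n. destruct (Nat.lt_ge_cases n 2).
    - rewrite uu_small by auto. apply div_nonneg; lra.
    - replace n with ((n - 2) + 2)%nat by lia. rewrite uu_qE.
      pose proof (key alpha Ha (n-2) m0 M y H1 H2 H3 Hy). fold d in H0.
      pose proof (uu_le_LL m0 (n - 2 + 2)). rewrite uu_qE in H4.
      apply (Rmult_le_reg_l (2 - d)); [lra|]. replace ((2 - d) * (c / (2 - d))) with c by (field; lra).
      unfold c. lra. }
  apply (Rmult_le_compat_l (2 - d)) in HL; [|lra]. replace ((2 - d) * (c / (2 - d))) with c in HL by (field; lra). exact HL.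
Qed.

Lemma LL_cv0 : Un_cv LL 0.
Proof.
  destruct (decreasing_cv LL LL_decr) as [l Hl].
  { exists 0. intros x [n ->]. unfold opp_seq. pose proof (LL_nonneg n). lra. }
  assert (Hl0 : 0 <= l) by (apply (lim_ge LL); auto; apply LL_nonneg).
  assert (Hle : forall n, l <= LL n) by (apply decreasing_ineq; auto; apply LL_decr).
  assert (l = 0).
  { destruct Hl0 as [Hpos|]; auto. exfalso.
    set (eta := Rmin (l / 4) (1/4)).
    assert (Heta : 0 < eta) by (unfold eta; apply Rmin_pos; lra).
    assert (Heta1 : eta <= l / 4) by apply Rmin_l.
    assert (Heta2 : eta <= 1 / 4) by apply Rmin_r.
    destruct (Hl eta Heta) as [N HN].
    set (m0 := S N). assert (Hm0 : LL m0 <= l + eta).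
    { specialize (HN m0 ltac:(unfold m0; lia)). unfold Rdist in HN. apply Rabs_def2 in HN. lra. }
    set (C0 := sumn (fun k => npow alpha k) m0).
    assert (HC0 : 0 <= C0) by (apply sumn_nonneg, npow_nonneg).
    set (y := (2 * C0 + 2) / eta).
    assert (Hy : 0 < y) by (unfold y; apply Rdiv_lt_0_compat; lra).
    assert (Hy1 : C0 / y <= eta / 2).
    { unfold y. replace (C0 / ((2 * C0 + 2) / eta)) with (eta * (C0 / (2 * C0 + 2))) by (field; lra).
      assert (C0 / (2 * C0 + 2) <= 1/2) by (apply (Rmult_le_reg_r (2 * C0 + 2)); [lra|]; field_simplify; lra).
      nra. }
    assert (Hy2 : 1 / (1 + y^2) <= eta / 2).
    { assert (2 / eta <= y) by (unfold y; unfold Rdiv; apply Rmult_le_compat_r; [left; apply Rinv_0_lt_compat; lra| lra]).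
      assert (8 <= y). { apply Rle_trans with (2 / eta); auto. apply (Rmult_le_reg_r eta); auto. field_simplify; lra. }
      assert (1 / (1 + y^2) <= 1 / y). { apply Rmult_le_compat_l; [lra|]. apply Rinv_le_contravar; [lra|]. nra. }
      assert (Hey : eta * y = 2 * C0 + 2) by (unfold y; field; lra).
      assert (1 / y <= eta / 2). { apply (Rmult_le_reg_r y); [lra|]. replace (1 / y * y) with 1 by (field; lra).
        replace (eta / 2 * y) with ((eta * y) / 2) by (field; lra). rewrite Hey. lra. }
      lra. }
    assert (Hln : 0 < ln (1 + eta) / (2 * y)).
    { apply Rdiv_lt_0_compat; [|lra]. rewrite <- ln_1. apply ln_increasing; lra. }
    destruct (Tb_small alpha (ln (1 + eta) / (2 * y)) (m0) Ha Hln) as [M [HM1 [HM2 HM3]]].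
    assert (Hd : exp (2 * (y * Tb alpha M)) - 1 <= eta).
    { assert (2 * (y * Tb alpha M) <= ln (1 + eta)).
      { apply (Rmult_le_compat_l (2 * y)) in HM3; [|lra]. replace (2 * y * (ln (1 + eta) / (2 * y))) with (ln (1 + eta)) in HM3 by (field; lra). lra. }
      apply exp_le' in H. rewrite exp_ln in H by lra. lra. }
    pose proof (key_lim m0 M y ltac:(unfold m0; lia) HM1 HM2 Hy ltac:(lra)). fold C0 in H.
    pose proof (Hle M).
    assert ((2 - eta) * l <= (2 - (exp (2 * (y * Tb alpha M)) - 1)) * LL M) by (apply Rmult_le_compat; lra).
    nra. }
  subst. auto.
Qed.
End Final.

Theorem mainTheorem7 (alpha : R) (Halpha : 1 < alpha) :
  exists L : nat -> R,
    (forall M : nat,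
        Un_cv (fun k : nat => range_sum (fun i => bingo alpha i (k - i)) M (k - M)) (L M))
    /\ Un_cv L 0.
Proof.
  exists (LL alpha Halpha). split.
  - intros M. apply (LL_cv alpha Halpha M).
  - apply LL_cv0.
Qed.
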